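(* Let $k$ be a positive integer, $p\ge 1$ and $0<\delta\le 1$. Let $(\Omega,\mathcal{F},\mathbb{P})$ be a probability space, $\Sigma$ a $k$-semiring on $\Omega$ with $\Sigma\subseteq\mathcal{F}$, $\mathcal{Q}$ a finite partition of $\Omega$ with $\mathcal{Q}\subseteq\Sigma$, and $f\in L_p(\Omega,\mathcal{F},\mathbb{P})$ with $\|f-\mathbb{E}(f\mid\mathcal{A}_{\mathcal{Q}})\|_{\Sigma}>\delta$. Then there exists a refinement $\mathcal{R}$ of $\mathcal{Q}$ with $\mathcal{R}\subseteq\Sigma$ and $|\mathcal{R}|\le|\mathcal{Q}|(k+1)$ such that $\|\mathbb{E}(f\mid\mathcal{A}_{\mathcal{R}})-\mathbb{E}(f\mid\mathcal{A}_{\mathcal{Q}})\|_{L_p}>\delta$.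
   Context: A collection $\Sigma$ of subsets of a nonempty set $\Omega$ is a $k$-semiring on $\Omega$ if: $\emptyset,\Omega\in\Sigma$; $S\cap T\in\Sigma$ for $S,T\in\Sigma$; for $S,T\in\Sigma$ there exist $\ell\in\{1,\dots,k\}$ and pairwise disjoint $R_1,\dots,R_\ell\in\Sigma$ with $S\setminus T=R_1\cup\dots\cup R_\ell$. The $\Sigma$-uniformity norm is $\|g\|_{\Sigma}=\sup\{|\int_S g\,d\mathbb{P}|:S\in\Sigma\}$. For a finite partition $\mathcal{Q}$, $\mathcal{A}_{\mathcal{Q}}$ is the $\sigma$-algebra generated by $\mathcal{Q}$; $\mathcal{Q}\subseteq\Sigma$ means every member of $\mathcal{Q}$ lies in $\Sigma$. *)

(* Defs.v *)
From HB Require Import structures.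
From mathcomp Require Import all_boot all_order all_algebra finmap.
From mathcomp Require Import all_classical all_reals all_analysis.
Set Implicit Arguments. Unset Strict Implicit. Unset Printing Implicit Defensive.
Import Order.TTheory GRing.Theory Num.Theory.
Local Open Scope classical_set_scope.
Local Open Scope ring_scope.

(* k-semiring on the whole type T (Omega = [set: T]). *)
Definition ksemiring (T : Type) (k : nat) (Sigma : set (set T)) : Prop :=
  [/\ Sigma set0, Sigma setT,
      (forall S U, Sigma S -> Sigma U -> Sigma (S `&` U)) &
      (forall S U, Sigma S -> Sigma U ->
         exists (l : nat) (Rs : 'I_l -> set T),
           [/\ (1 <= l <= k)%N,
               (forall i, Sigma (Rs i)),
               (forall i j, i != j -> Rs i `&` Rs j = set0) &
               S `\` U = \bigcup_(i in [set: 'I_l]) Rs i])].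

Definition is_partition (T : choiceType) (Q : {fset (set T)}) : Prop :=
  [/\ (forall A, A \in Q -> A !=set0),
      (forall A B, A \in Q -> B \in Q -> A != B -> A `&` B = set0) &
      (forall x : T, exists2 A, A \in Q & A x)].

Definition refines (T : choiceType) (R Q : {fset (set T)}) : Prop :=
  forall A, A \in R -> exists2 B, B \in Q & A `<=` B.

(* Conditional expectation of f with respect to the sigma-algebra generated by
   the finite partition Q: on a cell A it equals the average (1/P A) int_A f dP;
   on null cells (defined only a.e.) we take the value 0. *)
Definition condexp_part d (T : measurableType d) (R : realType)
  (P : probability T R) (Q : {fset (set T)}) (f : T -> R) : T -> R :=
  fun x => (\sum_(A <- Q)
    (\1_A x * (if fine (P A) == 0 then 0
               else Rintegral P A f / fine (P A))))%R.

Definition sigma_norm d (T : measurableType d) (R : realType)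
  (P : probability T R) (Sigma : set (set T)) (g : T -> R) : \bar R :=
  ereal_sup [set `| (\int[P]_(x in S) (g x)%:E) |%E | S in Sigma].

(* Main.v *)
Require Import Defs.
From HB Require Import structures.
From mathcomp Require Import all_boot all_order all_algebra finmap.
From mathcomp Require Import all_classical all_reals all_analysis.
From mathcomp Require Import ring lra.
Import Order.TTheory GRing.Theory Num.Theory.
Import numFieldNormedType.Exports.
Local Open Scope classical_set_scope.
Local Open Scope ring_scope.

Section helpers.
Context {d} {T : measurableType d} {R : realType} (P : probability T R).

Lemma Lnorm1_le (h : T -> R) (p : R) : 1 <= p -> measurable_fun setT h ->
  (Lnorm P 1 (EFin \o h) <= Lnorm P p%:E (EFin \o h))%E.
Proof.
move=> p1 mh.
have [->|pn1] := eqVneq p 1; first by [].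
have p1' : 1 < p by rewrite lt_neqAle eq_sym pn1.
have p0 : 0 < p by rewrite (lt_trans ltr01).
pose q := p / (p - 1).
have q0 : 0 < q by rewrite divr_gt0 // subr_gt0.
have pq : p^-1 + q^-1 = 1.
  rewrite /q invf_div; field; rewrite gt_eqF //.
have := @hoelder _ _ _ P h (cst 1) p q mh (measurable_cst _) p0 q0 pq.
have -> : Lnorm P q%:E (EFin \o cst 1) = 1%:E.
  rewrite (@eq_Lnorm _ _ _ P _ _ (cst 1%E)) //.
  rewrite Lnorm_cst1.
  apply: (eq_trans (congr1 (fun x => (x `^ q^-1)%E) (probability_setT P))).
  exact: poweR1r.
rewrite mule1; apply: le_trans; rewrite le_eqVlt; apply/orP; left; apply/eqP.
by apply: eq_Lnorm => x /=; rewrite mulr1.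
Qed.

Definition disj (R0 : {fset (set T)}) :=
  forall A B, A \in R0 -> B \in R0 -> A != B -> A `&` B = set0.

Definition cval (f : T -> R) (B : set T) : R :=
  if fine (P B) == 0 then 0 else Rintegral P B f / fine (P B).

Lemma sum_part R0 (F : set T -> R) x B0 : disj R0 -> B0 \in R0 -> B0 x ->
  \sum_(A <- R0) \1_A x * F A = F B0.
Proof.
move=> dR B0R B0x.
rewrite (big_fsetD1 B0) //= indicE mem_set // mul1r big1_fset ?addr0 //.
move=> A; rewrite in_fsetD1 => /andP[AB0 AR] _.
rewrite indicE memNset ?mul0r // => Ax.
have := dR A B0 AR B0R AB0; rewrite -subset0 => /(_ x); apply; by split.
Qed.

Lemma cond_cell R0 f x B : disj R0 -> B \in R0 -> B x ->
  condexp_part P R0 f x = cval f B.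
Proof. by move=> dR BR Bx; rewrite /condexp_part (@sum_part R0 _ x B dR BR Bx). Qed.

Lemma restrict_indic (A : set T) (g : T -> R) (x : T) : (g \_ A) x = \1_A x * g x.
Proof. by rewrite patchE indicE; case: ifPn => _; rewrite ?mul1r ?mul0r. Qed.

Lemma int_indicM A g : measurable A -> P.-integrable setT (EFin \o g) ->
  P.-integrable setT (EFin \o (fun x => \1_A x * g x)).
Proof.
move=> mA ig.
have : P.-integrable A (EFin \o g) by apply: (integrableS measurableT mA (@subsetT _ A) ig).
rewrite integrable_mkcond // restrict_EFin.
apply: (eq_integrable measurableT) => // x _ /=; by rewrite restrict_indic.
Qed.

Lemma cond_int R0 f : (forall A, A \in R0 -> measurable A) ->
  P.-integrable setT (EFin \o condexp_part P R0 f).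
Proof.
move=> mR0.
have -> : EFin \o condexp_part P R0 f =
    fun x => \sum_(A <- R0 | A \in R0) ((\1_A x * cval f A)%:E).
  apply/funext => x /=; rewrite /condexp_part sumEFin big_seq //.
apply: (integrable_sum measurableT) => A AR.
exact: (@int_indicM A (fun=> cval f A) (mR0 _ AR) (finite_measure_integrable_cst P (cval f A) measurableT)).
Qed.

Lemma Rint_sum (I : eqType) (s : seq I) (F : I -> T -> R) :
  (forall i, i \in s -> P.-integrable setT (EFin \o F i)) ->
  Rintegral P setT (fun x => \sum_(i <- s) F i x) = \sum_(i <- s) Rintegral P setT (F i).
Proof.
elim: s => [_|i s IH H].
  rewrite big_nil; under eq_Rintegral do rewrite big_nil.
  by rewrite Rintegral_cst // mul0r.
rewrite big_cons; under eq_Rintegral do rewrite big_cons.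
rewrite RintegralD //; last 2 first.
- by apply: H; rewrite mem_head.
- have -> : EFin \o (fun x => \sum_(j <- s) F j x) = fun x => \sum_(j <- s | j \in s) (F j x)%:E.
    by apply/funext => x /=; rewrite sumEFin big_seq.
  by apply: (integrable_sum measurableT) => j js; apply: H; rewrite in_cons js orbT.
by rewrite IH // => j js; apply: H; rewrite in_cons js orbT.
Qed.

Lemma cell_integral f B S : measurable_fun setT f -> measurable B -> measurable S ->
  (B `<=` S \/ B `&` S = set0) ->
  cval f B * fine (P (B `&` S)) = Rintegral P (B `&` S) f.
Proof.
move=> mf mB mS [BS|BS0]; last by rewrite BS0 Rintegral_set0 measure0 mulr0.
rewrite setIidl // /cval; case: ifPn => [/eqP P0|P0]; last by rewrite divfK.
have PB0 : P B = 0%E by rewrite -[P B]fineK ?P0 // fin_num_measure.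
rewrite mul0r /Rintegral null_set_integral //.
apply/measurable_realfun.measurable_EFinP; exact: (measurable_funS measurableT).
Qed.

Lemma Rint_indicM A g : measurable A ->
  Rintegral P setT (fun x => \1_A x * g x) = Rintegral P A g.
Proof.
move=> mA; rewrite [RHS]Rintegral_mkcond; apply: eq_Rintegral => x _.
by rewrite restrict_indic.
Qed.

Lemma key R0 S f : is_partition R0 -> (forall A, A \in R0 -> measurable A) ->
  measurable S -> (forall B, B \in R0 -> B `<=` S \/ B `&` S = set0) ->
  measurable_fun setT f -> P.-integrable setT (EFin \o f) ->
  Rintegral P S (condexp_part P R0 f) = Rintegral P S f.
Proof.
move=> [ne dR cov] mR0 mS cS mf fi.
rewrite Rintegral_mkcond [RHS]Rintegral_mkcond.
transitivity (Rintegral P setT (fun x => \sum_(B <- R0) \1_(B `&` S) x * cval f B)).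
  apply: eq_Rintegral => x _; have [B0 B0R B0x] := cov x.
  rewrite restrict_indic (@sum_part R0 (cval f) x B0 dR B0R B0x).
  under eq_bigr => B _ do rewrite indicI /= -mulrA.
  by rewrite (@sum_part R0 (fun B => \1_S x * cval f B) x B0 dR B0R B0x).
transitivity (Rintegral P setT (fun x => \sum_(B <- R0) \1_(B `&` S) x * f x)); last first.
  apply: eq_Rintegral => x _; have [B0 B0R B0x] := cov x.
  rewrite restrict_indic.
  under eq_bigr => B _ do rewrite indicI /= -mulrA.
  by rewrite (@sum_part R0 (fun B => \1_S x * f x) x B0 dR B0R B0x).
have mBS B : B \in R0 -> measurable (B `&` S) by move=> BR; apply: measurableI => //; exact: mR0.
rewrite !Rint_sum.
- apply: eq_big_seq => B BR.
  rewrite [RHS]Rint_indicM; last exact: mBS.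
  rewrite -[RHS]cell_integral //; last 2 first.
  + exact: mR0.
  + exact: cS.
  under eq_Rintegral do rewrite mulrC.
  rewrite RintegralZl //; last exact: integrable_indic (mBS B BR).
  by rewrite /Rintegral integral_indic ?setIT //; exact: mBS.
- by move=> B BR; apply: (@int_indicM (B `&` S) f (mBS B BR) fi).
- move=> B BR; apply: (@int_indicM _ (fun=> cval f B) (mBS B BR)).
  exact: (finite_measure_integrable_cst P (cval f B) measurableT).
Qed.
End helpers.
Lemma sumn_le (U : eqType) (s : seq U) (g : U -> nat) m :
  (forall u, u \in s -> (g u <= m)%N) -> (sumn (map g s) <= size s * m)%N.
Proof.
elim: s => [//|u s IH H] /=.
rewrite mulSn leq_add //; first by apply: H; rewrite mem_head.
by apply: IH => v vs; apply: H; rewrite in_cons vs orbT.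
Qed.

Lemma construct (T : choiceType) (k : nat) (Sigma : set (set T)) (Q : {fset (set T)}) (S : set T) :
  ksemiring k Sigma -> is_partition Q -> (forall A, A \in Q -> Sigma A) -> Sigma S ->
  exists Rp : {fset (set T)},
    [/\ is_partition Rp, refines Rp Q, (forall A, A \in Rp -> Sigma A),
        (#|` Rp| <= #|` Q| * k.+1)%N &
        (forall B, B \in Rp -> B `<=` S \/ B `&` S = set0)].
Proof.
move=> [S0 ST SI SD] [neQ dQ covQ] SQ SS.
have hp : forall A, exists s : seq (set T), Sigma A ->
  [/\ (size s <= k.+1)%N, (forall B, B \in s -> Sigma B),
      (forall B B', B \in s -> B' \in s -> B != B' -> B `&` B' = set0),
      ((forall B, B \in s -> B `<=` A) /\
      (forall x, A x -> exists2 B, B \in s & B x)) &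
      (forall B, B \in s -> B `<=` S \/ B `&` S = set0)].
  move=> A; case: (pselect (Sigma A)) => SA; last by exists [::].
  have [l [Rs [/andP[l1 lk] RsS Rsd Rseq]]] := SD A S SA SS.
  have RsAS i : Rs i `<=` A `\` S by rewrite Rseq => x Rx; exists i.
  have memP B : B \in (A `&` S) :: [seq Rs i | i <- enum 'I_l] ->
      B = A `&` S \/ exists i, B = Rs i.
    rewrite in_cons => /orP[/eqP->|/mapP[i _ ->]]; [by left|by right; exists i].
  exists ((A `&` S) :: [seq Rs i | i <- enum 'I_l]) => _; split.
  - by rewrite /= size_map size_enum_ord.
  - by move=> B /memP[->|[i ->]]; [exact: SI|exact: RsS].
  - move=> B B' /memP[->|[i ->]] /memP[->|[j ->]] neq.
    + by rewrite eqxx in neq.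
    + by rewrite -subset0 => x [[_ Sx] /RsAS[_]].
    + by rewrite -subset0 => x [/RsAS[_] + [_ Sx]].
    + apply: Rsd; apply: contraNneq neq => ->; exact: eqxx.
  - split.
    move=> B /memP[->|[i ->]]; first by move=> x [].
    by move=> x /RsAS[].
    move=> x Ax; case: (pselect (S x)) => Sx.
      by exists (A `&` S); [rewrite mem_head|].
    have : (A `\` S) x by [].
    rewrite Rseq => -[i _ Rx]; exists (Rs i) => //.
    by rewrite in_cons; apply/orP; right; apply/mapP; exists i => //; rewrite mem_enum.
  - move=> B /memP[->|[i ->]]; first by left => x [].
    by right; rewrite -subset0 => x [/RsAS[_]].
have [pc Hpc] := choice hp.
pose Rp := seq_fset tt [seq B <- flatten (map pc (enum_fset Q)) | B != set0].
have memRp B : B \in Rp -> B != set0 /\ exists2 A, A \in Q & B \in pc A.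
  rewrite seq_fsetE mem_filter => /andP[B0 /flattenP[s /mapP[A AQ ->] Bs]].
  by split => //; exists A.
have memRp' B A : B != set0 -> A \in Q -> B \in pc A -> B \in Rp.
  move=> B0 AQ BA; rewrite seq_fsetE mem_filter B0 /=.
  by apply/flattenP; exists (pc A) => //; apply/mapP; exists A.
exists Rp; split.
- split.
  + by move=> B /memRp[/set0P].
  + move=> B B' /memRp[_ [A AQ BA]] /memRp[_ [A' A'Q B'A']] neq.
    have [eAA'|nAA'] := eqVneq A A'.
      subst A'; have [_ _ hd _ _] := Hpc A (SQ A AQ); exact: hd.
    have [_ _ _ [hsub _] _] := Hpc A (SQ A AQ).
    have [_ _ _ [hsub' _] _] := Hpc A' (SQ A' A'Q).
    rewrite -subset0 => x [Bx B'x].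
    have := dQ A A' AQ A'Q nAA'; rewrite -subset0; apply; split.
    exact: hsub Bx. exact: hsub' B'x.
  + move=> x; have [A AQ Ax] := covQ x.
    have [_ _ _ [_ hcov] _] := Hpc A (SQ A AQ).
    have [B BA Bx] := hcov x Ax; exists B => //.
    by apply: memRp' AQ BA; apply/set0P; exists x.
- move=> B /memRp[_ [A AQ BA]]; exists A => //.
  by have [_ _ _ [hsub _] _] := Hpc A (SQ A AQ); exact: hsub.
- move=> B /memRp[_ [A AQ BA]].
  by have [_ hS _ _ _] := Hpc A (SQ A AQ); exact: hS.
- rewrite size_seq_fset; apply: (leq_trans (size_undup _)).
  rewrite size_filter (leq_trans (count_size _ _)) // size_flatten /shape -map_comp.
  apply: sumn_le => A AQ /=.
  by have [hs _ _ _ _] := Hpc A (SQ A AQ).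
- move=> B /memRp[_ [A AQ BA]].
  by have [_ _ _ _ hc] := Hpc A (SQ A AQ); exact: hc.
Qed.

Theorem lemma3p3 (d : measure_display) (T : measurableType d) (R : realType)
  (P : probability T R) (k : nat) (p delta : R)
  (Sigma : set (set T)) (Q : {fset (set T)}) (f : T -> R) :
  (0 < k)%N -> 1 <= p -> 0 < delta -> delta <= 1 ->
  ksemiring k Sigma -> (forall S, Sigma S -> measurable S) ->
  is_partition Q -> (forall A, A \in Q -> Sigma A) ->
  measurable_fun setT f -> (Lnorm P p%:E (fun x => (f x)%:E) < +oo)%E ->
  (delta%:E < sigma_norm P Sigma (fun x => f x - condexp_part P Q f x)%R)%E ->
  exists Rp : {fset (set T)},
    [/\ is_partition Rp, refines Rp Q, (forall A, A \in Rp -> Sigma A),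
        (#|` Rp|%fset <= #|` Q|%fset * k.+1)%N &
        (delta%:E < Lnorm P p%:E (fun x => (condexp_part P Rp f x - condexp_part P Q f x)%R%:E))%E].
Proof.
move=> k0 p1 d0 d1 ks mSig pQ SQ mf fLp.
move=> /ereal_sup_gt [y [S SS <-]] Hy.
have mS : measurable S := mSig S SS.
have [Rp [pR refR SR cardR cS]] := @construct T k Sigma Q S ks pQ SQ SS.
exists Rp; split => //.
have mQ : forall A, A \in Q -> measurable A by move=> A /SQ /mSig.
have mR : forall A, A \in Rp -> measurable A by move=> A /SR /mSig.
have iQ := cond_int P Q f mQ.
have iR := cond_int P Rp f mR.
have fi : P.-integrable setT (EFin \o f).
  apply/Lfun1_integrable.
  have pE : (1 <= p%:E)%E by rewrite lee_fin.
  have fin : P setT \is a fin_num by rewrite fin_num_measure.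
  have fLfun : f \in Lfun P p%:E.
    rewrite inE; apply/andP; split; rewrite inE //=.
  exact: (Lfun_subset (lexx 1%E) pE fin pE fLfun).
have iS g : P.-integrable setT (EFin \o g) -> P.-integrable S (EFin \o g).
  exact: (integrableS measurableT mS (@subsetT _ S)).
have igQ : P.-integrable setT (EFin \o (fun x => f x - condexp_part P Q f x)).
  exact: (integrableB measurableT fi iQ).
have ih : P.-integrable setT (EFin \o (fun x => condexp_part P Rp f x - condexp_part P Q f x)).
  exact: (integrableB measurableT iR iQ).
have eqS : Rintegral P S (fun x => f x - condexp_part P Q f x) =
           Rintegral P S (fun x => condexp_part P Rp f x - condexp_part P Q f x).
  rewrite !RintegralB //; try exact: iS.
  by rewrite (@key d T R P Rp S f pR mR mS cS mf fi).
apply: (lt_le_trans Hy).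
rewrite /= -(EFin_normr_Rintegral mS (iS _ igQ)) eqS (EFin_normr_Rintegral mS (iS _ ih)).
have mh := measurable_int P ih.
apply: le_trans; first apply: (le_abse_integral P mS).
  exact: (measurable_funS measurableT (@subsetT _ S) mh).
apply: le_trans.
  apply: (ge0_subset_integral P mS measurableT) => //.
  exact: (measurable_int P (integrable_abse ih)).
rewrite -Lnorm1.
apply: (@Lnorm1_le d T R P (fun x => condexp_part P Rp f x - condexp_part P Q f x) p p1).
exact/measurable_realfun.measurable_EFinP.
Qed.
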